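(* There exists $n_0$ such that the following holds for all $n\ge n_0$. Let $G$ be a simple connected graph on $n$ vertices with $\lambda_1(G)=\alpha(n)$, and let $f$ be a harmonic eigenfunction for $\lambda_1(G)$. Then every edge $wz$ with $f(w)<0\le f(z)$ is a bridge of $G$, i.e. $G$ minus that edge is disconnected.
   Context: For a connected simple graph $G$ with degree function $d$, \[ \lambda_1(G)=\inf_{f\neq 0,\ \sum_u f(u)d(u)=0}\frac{\sum_{u\sim v}(f(u)-f(v))^2}{\sum_v f(v)^2 d(v)}, \] where the numerator sums over edges. This is the second smallest eigenvalue of the normalized Laplacian. A harmonic eigenfunction is a nonzero $f$ with $\sum_u f(u)d(u)=0$ attaining the infimum. Also, \[ \alpha(n)=\min\{\lambda_1(G): G\text{ simple connected on } n\text{ vertices}\}. \] *)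

(* Defs.v *)
From Stdlib Require Import Reals Lra Lia Arith Bool ClassicalEpsilon.
Open Scope R_scope.

(* A graph on n vertices: vertex set {0,...,n-1}, adjacency adj : nat -> nat -> bool
   (only its values on vertices < n matter). *)

Definition simple_graph (n : nat) (adj : nat -> nat -> bool) : Prop :=
  (forall u v, (u < n)%nat -> (v < n)%nat -> adj u v = adj v u) /\
  (forall u, (u < n)%nat -> adj u u = false).

Inductive reach (n : nat) (adj : nat -> nat -> bool) : nat -> nat -> Prop :=
  | reach_refl : forall u, (u < n)%nat -> reach n adj u u
  | reach_step : forall u v w, reach n adj u v -> (w < n)%nat -> adj v w = true ->
                   reach n adj u w.

Definition connected (n : nat) (adj : nat -> nat -> bool) : Prop :=
  forall u v, (u < n)%nat -> (v < n)%nat -> reach n adj u v.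

Definition remove_edge (adj : nat -> nat -> bool) (w z : nat) : nat -> nat -> bool :=
  fun a b => adj a b && negb (((a =? w) && (b =? z)) || ((a =? z) && (b =? w)))%bool.

Fixpoint rsum (n : nat) (g : nat -> R) : R :=
  match n with
  | O => 0
  | S m => rsum m g + g m
  end.

Definition deg (n : nat) (adj : nat -> nat -> bool) (u : nat) : R :=
  rsum n (fun v => if adj u v then 1 else 0).

Definition edge_energy (n : nat) (adj : nat -> nat -> bool) (f : nat -> R) : R :=
  rsum n (fun u => rsum n (fun v =>
    if ((u <? v)%nat && adj u v)%bool then (f u - f v) ^ 2 else 0)).

Definition weighted_norm (n : nat) (adj : nat -> nat -> bool) (f : nat -> R) : R :=
  rsum n (fun v => (f v) ^ 2 * deg n adj v).

Definition degree_orth (n : nat) (adj : nat -> nat -> bool) (f : nat -> R) : Prop :=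
  rsum n (fun u => f u * deg n adj u) = 0.

Definition nonzero_fun (n : nat) (f : nat -> R) : Prop :=
  exists v, (v < n)%nat /\ f v <> 0.

Definition rayleigh (n : nat) (adj : nat -> nat -> bool) (f : nat -> R) : R :=
  edge_energy n adj f / weighted_norm n adj f.

Definition rayleigh_set (n : nat) (adj : nat -> nat -> bool) (r : R) : Prop :=
  exists f, nonzero_fun n f /\ degree_orth n adj f /\ r = rayleigh n adj f.

Definition is_inf (S : R -> Prop) (l : R) : Prop :=
  (forall r, S r -> l <= r) /\ (forall m, (forall r, S r -> m <= r) -> m <= l).

Definition lambda1 (n : nat) (adj : nat -> nat -> bool) : R :=
  epsilon (inhabits 0) (fun l => is_inf (rayleigh_set n adj) l).

Definition harmonic (n : nat) (adj : nat -> nat -> bool) (f : nat -> R) : Prop :=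
  nonzero_fun n f /\ degree_orth n adj f /\ rayleigh n adj f = lambda1 n adj.

Definition alpha (n : nat) : R :=
  epsilon (inhabits 0) (fun a =>
    (exists adj, simple_graph n adj /\ connected n adj /\ a = lambda1 n adj) /\
    (forall adj, simple_graph n adj -> connected n adj -> a <= lambda1 n adj)).

(* Main.v *)
Require Import Defs.
From Stdlib Require Import Reals Lra Lia Arith Bool ClassicalEpsilon Classical FunctionalExtensionality PropExtensionality.
Open Scope R_scope.

Lemma rsum_ext n g h : (forall i, (i < n)%nat -> g i = h i) -> rsum n g = rsum n h.
Proof. induction n; intros H; simpl; auto. rewrite IHn by (intros; apply H; lia). rewrite H by lia. auto. Qed.

Lemma rsum_plus n g h : rsum n (fun i => g i + h i) = rsum n g + rsum n h.
Proof. induction n; simpl; [lra|rewrite IHn; lra]. Qed.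
Lemma rsum_minus n g h : rsum n (fun i => g i - h i) = rsum n g - rsum n h.
Proof. induction n; simpl; [lra|rewrite IHn; lra]. Qed.
Lemma rsum_scal n c g : rsum n (fun i => c * g i) = c * rsum n g.
Proof. induction n; simpl; [lra|rewrite IHn; lra]. Qed.
Lemma rsum_zero n : rsum n (fun _ => 0) = 0.
Proof. induction n; simpl; [lra|rewrite IHn; lra]. Qed.
Lemma rsum_const1 n : rsum n (fun _ => 1) = INR n.
Proof. induction n; simpl rsum; [simpl; lra|rewrite IHn, S_INR; lra]. Qed.
Lemma rsum_nonneg n g : (forall i, (i < n)%nat -> 0 <= g i) -> 0 <= rsum n g.
Proof. induction n; intros H; simpl; [lra|]. assert (0 <= g n) by (apply H; lia).
  assert (0 <= rsum n g) by (apply IHn; intros; apply H; lia). lra. Qed.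
Lemma rsum_le n g h : (forall i, (i < n)%nat -> g i <= h i) -> rsum n g <= rsum n h.
Proof. induction n; intros H; simpl; [lra|]. assert (g n <= h n) by (apply H; lia).
  assert (rsum n g <= rsum n h) by (apply IHn; intros; apply H; lia). lra. Qed.
Lemma rsum_ge_term n g k : (forall i, (i < n)%nat -> 0 <= g i) -> (k < n)%nat -> g k <= rsum n g.
Proof. induction n; intros H Hk; [lia|]. simpl.
  assert (0 <= g n) by (apply H; lia).
  assert (0 <= rsum n g) by (apply rsum_nonneg; intros; apply H; lia).
  destruct (Nat.eq_dec k n) as [->|Hne]; [lra|].
  assert (g k <= rsum n g) by (apply IHn; [intros; apply H; lia| lia]). lra. Qed.
Lemma rsum_pick n k g : (k < n)%nat -> rsum n (fun i => if (i =? k)%nat then g i else 0) = g k.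
Proof. induction n; intros Hk; [lia|]. simpl.
  destruct (Nat.eq_dec k n) as [->|Hne].
  - rewrite Nat.eqb_refl. rewrite (rsum_ext n _ (fun _ => 0)), rsum_zero; [lra|].
    intros i Hi. destruct (Nat.eqb_spec i n); [lia|auto].
  - rewrite IHn by lia. destruct (Nat.eqb_spec n k); [lia|lra]. Qed.
Lemma rsum_if n (b : bool) g : rsum n (fun i => if b then g i else 0) = if b then rsum n g else 0.
Proof. destruct b; [auto|apply rsum_zero]. Qed.

Lemma Rdiv_nonneg_any a b : 0 <= a -> 0 <= b -> 0 <= a / b.
Proof. intros Ha Hb. destruct (Req_dec b 0) as [->|Hb'].
  - unfold Rdiv. rewrite Rinv_0. lra.
  - unfold Rdiv; apply Rmult_le_pos; [lra| apply Rlt_le, Rinv_0_lt_compat; lra]. Qed.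

Lemma energy_nonneg n adj f : 0 <= edge_energy n adj f.
Proof. unfold edge_energy. apply rsum_nonneg; intros. apply rsum_nonneg; intros.
  destruct (_ && _); [apply pow2_ge_0|lra]. Qed.

Lemma deg_nonneg n adj u : 0 <= deg n adj u.
Proof. unfold deg. apply rsum_nonneg; intros. destruct (adj u i); lra. Qed.

Lemma norm_nonneg n adj f : 0 <= weighted_norm n adj f.
Proof. unfold weighted_norm. apply rsum_nonneg; intros.
  apply Rmult_le_pos; [apply pow2_ge_0|apply deg_nonneg]. Qed.

Lemma rayleigh_nonneg n adj f : 0 <= rayleigh n adj f.
Proof. apply Rdiv_nonneg_any; [apply energy_nonneg|apply norm_nonneg]. Qed.

Lemma lambda1_spec n adj : (exists r, rayleigh_set n adj r) -> is_inf (rayleigh_set n adj) (lambda1 n adj).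
Proof. intros [r0 Hr0]. unfold lambda1. apply epsilon_spec.
  set (E := fun x => rayleigh_set n adj (- x)).
  assert (HB : bound E). { exists 0. intros x [f [_ [_ Hx]]]. pose proof (rayleigh_nonneg n adj f). lra. }
  assert (HE : exists x, E x). { exists (- r0). unfold E. rewrite Ropp_involutive. auto. }
  destruct (completeness E HB HE) as [m [Hm1 Hm2]].
  exists (- m). split.
  - intros r Hr. assert (E (- r)) by (unfold E; rewrite Ropp_involutive; auto).
    pose proof (Hm1 _ H). lra.
  - intros l Hl. assert (m <= - l). { apply Hm2. intros x Hx. pose proof (Hl _ Hx). lra. } lra.
Qed.

Lemma lambda1_le n adj f : nonzero_fun n f -> degree_orth n adj f -> lambda1 n adj <= rayleigh n adj f.
Proof. intros H1 H2. assert (Hs : rayleigh_set n adj (rayleigh n adj f)) by (exists f; auto).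
  destruct (lambda1_spec n adj (ex_intro _ _ Hs)) as [A _]. apply A; auto. Qed.

Definition gvol n adj := rsum n (deg n adj).
Definition gdsum n adj f := rsum n (fun u => f u * deg n adj u).

Lemma energy_shift n adj f c : edge_energy n adj (fun u => f u - c) = edge_energy n adj f.
Proof. unfold edge_energy. apply rsum_ext; intros. apply rsum_ext; intros.
  destruct (_ && _); [ring|auto]. Qed.

Lemma norm_shift n adj f c : weighted_norm n adj (fun u => f u - c) =
   weighted_norm n adj f - 2 * c * gdsum n adj f + c^2 * gvol n adj.
Proof. unfold weighted_norm, gdsum, gvol.
  assert (E : forall i, (i < n)%nat -> (f i - c)^2 * deg n adj i = (f i ^2 * deg n adj i - (2*c) * (f i * deg n adj i)) + c^2 * deg n adj i).
  { intros. ring. }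
  rewrite (rsum_ext n _ _ E).
  rewrite rsum_plus, rsum_minus, !rsum_scal. reflexivity. Qed.

Lemma shift_bound n adj f i j : 0 < gvol n adj -> (i < n)%nat -> (j < n)%nat -> f i <> f j ->
  lambda1 n adj <= edge_energy n adj f / (weighted_norm n adj f - (gdsum n adj f)^2 / gvol n adj).
Proof. intros HV Hi Hj Hf. set (c := gdsum n adj f / gvol n adj).
  assert (Hnz : nonzero_fun n (fun u => f u - c)).
  { destruct (Req_dec (f i) c). - exists j. split; auto. lra. - exists i. split; auto. lra. }
  assert (Ho : degree_orth n adj (fun u => f u - c)).
  { unfold degree_orth. rewrite (rsum_ext n (fun u => (f u - c) * deg n adj u) (fun u => f u * deg n adj u - c * deg n adj u)) by (intros; ring).
    rewrite rsum_minus, rsum_scal. fold (gdsum n adj f). fold (gvol n adj). unfold c. field. lra. }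
  pose proof (lambda1_le _ _ _ Hnz Ho) as H. unfold rayleigh in H.
  rewrite energy_shift, norm_shift in H.
  replace (weighted_norm n adj f - gdsum n adj f ^ 2 / gvol n adj) with
    (weighted_norm n adj f - 2 * c * gdsum n adj f + c ^ 2 * gvol n adj); auto.
  unfold c. field. lra. Qed.

Definition agree n (a b : nat -> nat -> bool) := forall u v, (u < n)%nat -> (v < n)%nat -> a u v = b u v.

Lemma deg_agree n a b u : agree n a b -> (u < n)%nat -> deg n a u = deg n b u.
Proof. intros H Hu. unfold deg. apply rsum_ext; intros. rewrite H; auto. Qed.

Lemma lambda1_agree n a b : agree n a b -> lambda1 n a = lambda1 n b.
Proof. intros H.
  assert (E : forall f, edge_energy n a f = edge_energy n b f).
  { intros f. unfold edge_energy. apply rsum_ext; intros. apply rsum_ext; intros. rewrite H; auto. }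
  assert (N : forall f, weighted_norm n a f = weighted_norm n b f).
  { intros f. unfold weighted_norm. apply rsum_ext; intros. rewrite (deg_agree n a b); auto. }
  assert (O : forall f, degree_orth n a f <-> degree_orth n b f).
  { intros f. unfold degree_orth. rewrite (rsum_ext n _ (fun u => f u * deg n b u)). tauto.
    intros; rewrite (deg_agree n a b); auto. }
  assert (S : rayleigh_set n a = rayleigh_set n b).
  { apply functional_extensionality; intros r. apply propositional_extensionality.
    unfold rayleigh_set, rayleigh. split; intros [f Hf]; exists f; rewrite ?E, ?N, ?O in *; rewrite <- ?E, <- ?N, <- ?O in *; tauto. }
  unfold lambda1. rewrite S. reflexivity. Qed.

Lemma reach_lt n a u v : reach n a u v -> (u < n)%nat /\ (v < n)%nat.
Proof. induction 1; tauto. Qed.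

Lemma reach_agree n a b u v : agree n a b -> reach n a u v -> reach n b u v.
Proof. intros H. induction 1. - constructor; auto. - apply reach_step with v; auto.
  apply reach_lt in H0. rewrite <- H; tauto. Qed.

Lemma connected_agree n a b : agree n a b -> connected n a -> connected n b.
Proof. intros H C u v Hu Hv. apply reach_agree with a; auto. Qed.

Lemma simple_agree n a b : agree n a b -> simple_graph n a -> simple_graph n b.
Proof. intros H [S1 S2]. split; intros; rewrite <- !H; auto. Qed.

Lemma deg_ge1 n adj u : simple_graph n adj -> connected n adj -> (2 <= n)%nat -> (u < n)%nat -> 1 <= deg n adj u.
Proof. intros [Sy Ir] C Hn Hu. set (v := if (u =? 0)%nat then 1%nat else 0%nat).
  assert (Hv : (v < n)%nat /\ v <> u) by (unfold v; destruct (Nat.eqb_spec u 0); lia).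
  assert (R : reach n adj v u) by (apply C; tauto).
  inversion R as [|a x b Hr Hb Hadj]. - lia.
  - subst. apply reach_lt in Hr. unfold deg.
    pose proof (rsum_ge_term n (fun w => if adj u w then 1 else 0) x) as T.
    rewrite Sy in Hadj by tauto. cbv beta in T. rewrite Hadj in T. apply T; [|tauto]. intros; destruct (adj u i); lra. Qed.

Definition upd (g : nat -> bool) k b := fun i => if (i =? k)%nat then b else g i.

Lemma fin_min : forall k (F : (nat -> bool) -> R) (P : (nat -> bool) -> Prop),
  (forall g h, (forall i, (i < k)%nat -> g i = h i) -> F g = F h /\ (P g -> P h)) ->
  (exists g, P g) -> exists g0, P g0 /\ forall g, P g -> F g0 <= F g.
Proof.
  induction k; intros F P Hinv [g1 Hg1].
  - exists g1. split; auto. intros g _. destruct (Hinv g1 g) as [E _]; [intros; lia|]. lra.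
  - assert (Hb : forall b, exists g0, (exists g, P (upd g k b)) -> P (upd g0 k b) /\ forall g, P (upd g k b) -> F (upd g0 k b) <= F (upd g k b)).
    { intros b. destruct (classic (exists g, P (upd g k b))) as [He|He].
      - destruct (IHk (fun g => F (upd g k b)) (fun g => P (upd g k b))) as [g0 Hg0]; auto.
        + intros g h Hgh. apply Hinv. intros i Hi. unfold upd. destruct (Nat.eqb_spec i k); auto. apply Hgh; lia.
        + exists g0. intros; auto.
      - exists g1. intros; tauto. }
    assert (Hself : forall g, F g = F (upd g k (g k)) /\ (P g -> P (upd g k (g k)))).
    { intros g. apply Hinv. intros i _. unfold upd. destruct (Nat.eqb_spec i k); subst; auto. }
    destruct (Hb true) as [mt Ht]. destruct (Hb false) as [mf Hf].
    assert (Pt : forall g, P g -> g k = true -> P (upd mt k true) /\ F (upd mt k true) <= F g).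
    { intros g Pg Eg. destruct (Hself g) as [E1 E2]. rewrite Eg in E1, E2.
      destruct Ht as [A B]; [exists g; auto|]. split; auto. rewrite E1. apply B; auto. }
    assert (Pf : forall g, P g -> g k = false -> P (upd mf k false) /\ F (upd mf k false) <= F g).
    { intros g Pg Eg. destruct (Hself g) as [E1 E2]. rewrite Eg in E1, E2.
      destruct Hf as [A B]; [exists g; auto|]. split; auto. rewrite E1. apply B; auto. }
    destruct (classic (exists g, P g /\ g k = true)) as [[gt [Pgt Egt]]|Nt];
    destruct (classic (exists g, P g /\ g k = false)) as [[gf [Pgf Egf]]|Nf].
    + destruct (Pt gt Pgt Egt) as [At _]. destruct (Pf gf Pgf Egf) as [Af _].
      destruct (Rle_dec (F (upd mt k true)) (F (upd mf k false))).
      * exists (upd mt k true). split; auto. intros g Pg. destruct (g k) eqn:Eg.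
        -- apply Pt; auto.
        -- destruct (Pf g Pg Eg). lra.
      * exists (upd mf k false). split; auto. intros g Pg. destruct (g k) eqn:Eg.
        -- destruct (Pt g Pg Eg). lra.
        -- apply Pf; auto.
    + exists (upd mt k true). split; [apply (Pt gt); auto|]. intros g Pg. destruct (g k) eqn:Eg.
      * apply Pt; auto.
      * exfalso; apply Nf; eauto.
    + exists (upd mf k false). split; [apply (Pf gf); auto|]. intros g Pg. destruct (g k) eqn:Eg.
      * exfalso; apply Nt; eauto.
      * apply Pf; auto.
    + exfalso. destruct (g1 k) eqn:E; [apply Nt|apply Nf]; eauto.
Qed.

Definition dec (n : nat) (g : nat -> bool) : nat -> nat -> bool := fun u v => g (u * n + v)%nat.
Definition enc (n : nat) (adj : nat -> nat -> bool) : nat -> bool := fun i => adj (i / n)%nat (i mod n)%nat.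

Lemma dec_enc n adj : agree n (dec n (enc n adj)) adj.
Proof. intros u v Hu Hv. unfold dec, enc.
  rewrite <- (Nat.div_unique (u * n + v) n u v) by lia.
  rewrite <- (Nat.mod_unique (u * n + v) n u v) by lia. auto. Qed.

Lemma alpha_spec n : (exists adj, simple_graph n adj /\ connected n adj) ->
  (exists adj, simple_graph n adj /\ connected n adj /\ alpha n = lambda1 n adj) /\
  (forall adj, simple_graph n adj -> connected n adj -> alpha n <= lambda1 n adj).
Proof. intros [a0 [S0 C0]]. unfold alpha. apply epsilon_spec.
  destruct (fin_min (n * n) (fun g => lambda1 n (dec n g)) (fun g => simple_graph n (dec n g) /\ connected n (dec n g)))
    as [g0 [[Sg Cg] Hg]].
  - intros g h H. assert (A : agree n (dec n g) (dec n h)).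
    { intros u v Hu Hv. unfold dec. apply H. nia. }
    split. apply lambda1_agree; auto. intros [S C]; split; [eapply simple_agree|eapply connected_agree]; eauto.
  - exists (enc n a0). split; [eapply simple_agree|eapply connected_agree]; try (intros u v Hu Hv; symmetry; apply dec_enc; auto); eauto.
  - exists (lambda1 n (dec n g0)). split; [exists (dec n g0); auto|].
    intros adj S C. rewrite <- (lambda1_agree n _ _ (dec_enc n adj)). apply Hg.
    split; [eapply simple_agree|eapply connected_agree]; try (intros u v Hu Hv; symmetry; apply dec_enc; auto); eauto.
Qed.

Definition padj : nat -> nat -> bool := fun u v => ((S u =? v) || (S v =? u))%nat.

Lemma path_simple n : simple_graph n padj.
Proof. split; intros; unfold padj. apply orb_comm. destruct (Nat.eqb_spec (S u) u); [lia|auto]. Qed.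

Lemma path_up n u k : (u + k < n)%nat -> reach n padj u (u + k).
Proof. induction k; intros H. - rewrite Nat.add_0_r. constructor; lia.
  - apply reach_step with (u + k)%nat; [apply IHk; lia|lia|]. unfold padj.
    destruct (Nat.eqb_spec (S (u + k)) (u + S k)); [auto|lia]. Qed.
Lemma path_down n u k : (k <= u)%nat -> (u < n)%nat -> reach n padj u (u - k).
Proof. induction k; intros H H'. - rewrite Nat.sub_0_r. constructor; lia.
  - apply reach_step with (u - k)%nat; [apply IHk; lia|lia|]. unfold padj.
    destruct (Nat.eqb_spec (S (u - S k)) (u - k)); [apply orb_true_r|lia]. Qed.
Lemma path_connected n : connected n padj.
Proof. intros u v Hu Hv. destruct (le_lt_dec u v).
  - replace v with (u + (v - u))%nat by lia. apply path_up; lia.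
  - replace v with (u - (u - v))%nat by lia. apply path_down; lia. Qed.

Lemma rsum_S n g : rsum (S n) g = rsum n g + g n.
Proof. reflexivity. Qed.

Definition f5 (u : nat) : R := if (5 <=? u)%nat then 1 else 0.

Lemma sum_low m : rsum (5 + m) (fun u => 1 - f5 u) = 5.
Proof. induction m. - unfold f5; simpl; lra.
  - replace (5 + S m)%nat with (S (5 + m)) by lia. rewrite rsum_S, IHm. unfold f5.
    destruct (Nat.leb_spec 5 (5 + m)); [lra|lia]. Qed.

Lemma path_energy n : (10 <= n)%nat -> edge_energy n padj f5 = 1.
Proof. intros Hn. unfold edge_energy.
  rewrite (rsum_ext n _ (fun u => if (u =? 4)%nat then (if (5 =? 5)%nat then 1 else 0) else 0)).
  - rewrite (rsum_pick n 4 (fun _ => if (5 =? 5)%nat then 1 else 0)) by lia. simpl. auto.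
  - intros u Hu. rewrite (rsum_ext n _ (fun v => if (u =? 4)%nat then (if (v =? 5)%nat then 1 else 0) else 0)).
    + rewrite rsum_if. destruct (u =? 4)%nat; auto. rewrite (rsum_pick n 5 (fun _ => 1)) by lia. auto.
    + intros v Hv. unfold padj, f5.
      destruct (Nat.ltb_spec u v), (Nat.eqb_spec (S u) v), (Nat.eqb_spec (S v) u), (Nat.leb_spec 5 u),
        (Nat.leb_spec 5 v), (Nat.eqb_spec u 4), (Nat.eqb_spec v 5); simpl; try lia; ring.
Qed.

Lemma path_deg n u : (2 <= n)%nat -> (u < n)%nat -> 1 <= deg n padj u.
Proof. intros; apply deg_ge1; auto using path_simple, path_connected. Qed.

Lemma path_lambda n : (10 <= n)%nat -> lambda1 n padj < 1/2.
Proof. intros Hn.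
  assert (HV : INR n <= gvol n padj).
  { rewrite <- rsum_const1. unfold gvol. apply rsum_le. intros; apply path_deg; lia. }
  assert (Hn' : 10 <= INR n) by (replace 10 with (INR 10) by (simpl; lra); apply le_INR; lia).
  pose proof (shift_bound n padj f5 5 0 ltac:(lra) ltac:(lia) ltac:(lia) ltac:(unfold f5; simpl; lra)) as B.
  rewrite path_energy in B by lia.
  assert (ED : weighted_norm n padj f5 = gdsum n padj f5).
  { unfold weighted_norm, gdsum. apply rsum_ext. intros; unfold f5; destruct (5 <=? i)%nat; ring. }
  assert (L : rsum n (fun u => 1 - f5 u) = 5).
  { replace n with (5 + (n - 5))%nat by lia. apply sum_low. }
  assert (HT : 5 <= gvol n padj - gdsum n padj f5).
  { unfold gvol, gdsum. rewrite <- rsum_minus. rewrite <- L.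
    apply rsum_le. intros. pose proof (path_deg n i ltac:(lia) ltac:(lia)).
    unfold f5; destruct (5 <=? i)%nat; lra. }
  assert (HS : 5 <= gdsum n padj f5).
  { assert (rsum n (fun u => 1 - f5 u) <= gvol n padj - gdsum n padj f5 ).
    { unfold gvol, gdsum. rewrite <- rsum_minus. apply rsum_le. intros.
      pose proof (path_deg n i ltac:(lia) ltac:(lia)). unfold f5; destruct (5 <=? i)%nat; lra. }
    assert (rsum n (fun u => f5 u) <= gdsum n padj f5).
    { unfold gdsum. apply rsum_le. intros.
      pose proof (path_deg n i ltac:(lia) ltac:(lia)). unfold f5; destruct (5 <=? i)%nat; lra. }
    assert (rsum n (fun u => f5 u) + rsum n (fun u => 1 - f5 u) = INR n).
    { rewrite <- rsum_plus, <- rsum_const1. apply rsum_ext; intros; ring. }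
    lra. }
  rewrite ED in B. set (x := gdsum n padj f5) in *. set (V := gvol n padj) in *.
  set (t := V - x) in *. replace V with (x + t) in B by (unfold t; ring).
  assert (Hy : x - x ^ 2 / (x + t) = x * t / (x + t)) by (field; lra).
  rewrite Hy in B.
  assert (Hy2 : 2 < x * t / (x + t)).
  { apply Rmult_lt_reg_r with (x + t); [lra|]. unfold Rdiv. rewrite Rmult_assoc, Rinv_l by lra. nra. }
  assert (1 / (x * t / (x + t)) < 1 / 2).
  { apply Rmult_lt_reg_r with (2 * (x * t / (x + t))); [lra|]. field_simplify; try lra. }
  lra.
Qed.

Section RE.
Variable n : nat.
Variable adj : nat -> nat -> bool.
Variables w z : nat.
Hypothesis Hwz : adj w z = true.
Hypothesis Hzw : adj z w = true.
Hypothesis Hne : w <> z.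
Hypothesis Hw : (w < n)%nat.
Hypothesis Hz : (z < n)%nat.
Let r := remove_edge adj w z.

Lemma ind_r u v : (if r u v then 1 else 0) = (if adj u v then 1 else 0)
  - (if (u =? w)%nat then (if (v =? z)%nat then 1 else 0) else 0)
  - (if (u =? z)%nat then (if (v =? w)%nat then 1 else 0) else 0).
Proof. unfold r, remove_edge.
  destruct (Nat.eqb_spec u w), (Nat.eqb_spec v z), (Nat.eqb_spec u z), (Nat.eqb_spec v w);
  destruct (adj u v) eqn:A; subst; simpl; try lia; try congruence; lra. Qed.

Lemma deg_r u : deg n r u = deg n adj u - (if (u =? w)%nat then 1 else 0) - (if (u =? z)%nat then 1 else 0).
Proof. unfold deg. rewrite (rsum_ext n _ _ (fun v _ => ind_r u v)).
  rewrite !rsum_minus, !rsum_if.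
  rewrite (rsum_pick n z (fun _ => 1)), (rsum_pick n w (fun _ => 1)) by auto. reflexivity. Qed.

Lemma dsum_r f : gdsum n r f = gdsum n adj f - f w - f z.
Proof. unfold gdsum.
  rewrite (rsum_ext n _ (fun u => f u * deg n adj u - (if (u =? w)%nat then f u else 0) - (if (u =? z)%nat then f u else 0))).
  - rewrite !rsum_minus, rsum_pick, rsum_pick by auto. reflexivity.
  - intros u _. rewrite deg_r. destruct (u =? w)%nat, (u =? z)%nat; ring. Qed.

Lemma norm_r f : weighted_norm n r f = weighted_norm n adj f - f w ^ 2 - f z ^ 2.
Proof. unfold weighted_norm.
  rewrite (rsum_ext n _ (fun u => f u ^ 2 * deg n adj u - (if (u =? w)%nat then f u ^ 2 else 0) - (if (u =? z)%nat then f u ^ 2 else 0))).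
  - rewrite !rsum_minus, (rsum_pick n w (fun u => f u ^ 2)), (rsum_pick n z (fun u => f u ^ 2)) by auto. reflexivity.
  - intros u _. rewrite deg_r. destruct (u =? w)%nat, (u =? z)%nat; ring. Qed.

Lemma energy_r f : edge_energy n r f = edge_energy n adj f - (f w - f z) ^ 2.
Proof. unfold edge_energy.
  rewrite (rsum_ext n _ (fun u => rsum n (fun v => if ((u <? v)%nat && adj u v)%bool then (f u - f v) ^ 2 else 0)
     - (if (u =? w)%nat then (if (w <? z)%nat then (f u - f z) ^ 2 else 0) else 0)
     - (if (u =? z)%nat then (if (z <? w)%nat then (f u - f w) ^ 2 else 0) else 0))).
  - rewrite !rsum_minus, (rsum_pick n w (fun u => if (w <? z)%nat then (f u - f z) ^ 2 else 0)),
      (rsum_pick n z (fun u => if (z <? w)%nat then (f u - f w) ^ 2 else 0)) by auto.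
    destruct (Nat.ltb_spec w z), (Nat.ltb_spec z w); try lia; ring.
  - intros u _.
    rewrite (rsum_ext n _ (fun v => (if ((u <? v)%nat && adj u v)%bool then (f u - f v) ^ 2 else 0)
     - (if (u =? w)%nat then (if (v =? z)%nat then (if (w <? z)%nat then (f u - f v) ^ 2 else 0) else 0) else 0)
     - (if (u =? z)%nat then (if (v =? w)%nat then (if (z <? w)%nat then (f u - f v) ^ 2 else 0) else 0) else 0))).
    + rewrite !rsum_minus, !rsum_if.
      rewrite (rsum_pick n z (fun v => if (w <? z)%nat then (f u - f v) ^ 2 else 0)),
        (rsum_pick n w (fun v => if (z <? w)%nat then (f u - f v) ^ 2 else 0)) by auto.
      destruct (u =? w)%nat, (u =? z)%nat; ring.
    + intros v _. unfold r, remove_edge.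
      destruct (Nat.eqb_spec u w), (Nat.eqb_spec v z), (Nat.eqb_spec u z), (Nat.eqb_spec v w);
      destruct (adj u v) eqn:A; destruct (Nat.ltb_spec u v), (Nat.ltb_spec w z), (Nat.ltb_spec z w);
      subst; simpl; try lia; try congruence; ring.
Qed.

Lemma r_simple : simple_graph n adj -> simple_graph n r.
Proof. intros [Sy Ir]. split; intros; unfold r, remove_edge.
  - rewrite Sy by auto. destruct (u =? w)%nat, (v =? z)%nat, (u =? z)%nat, (v =? w)%nat; reflexivity.
  - rewrite Ir by auto. reflexivity. Qed.
End RE.

Lemma norm_pos n adj f : (forall u, (u < n)%nat -> 1 <= deg n adj u) -> nonzero_fun n f -> 0 < weighted_norm n adj f.
Proof. intros Hd [v [Hv Hf]]. unfold weighted_norm.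
  assert (T : f v ^ 2 * deg n adj v <= rsum n (fun v => f v ^ 2 * deg n adj v)).
  { apply (rsum_ge_term n (fun v => f v ^ 2 * deg n adj v)); auto. intros.
    apply Rmult_le_pos; [apply pow2_ge_0|apply deg_nonneg]. }
  assert (0 < f v ^ 2) by (simpl; nra). pose proof (Hd v Hv). nra. Qed.

Theorem mainTheorem9 :
  exists n0 : nat, forall n : nat, (n0 <= n)%nat ->
  forall adj : nat -> nat -> bool,
    simple_graph n adj -> connected n adj ->
    lambda1 n adj = alpha n ->
    forall f : nat -> R, harmonic n adj f ->
    forall w z : nat, (w < n)%nat -> (z < n)%nat -> adj w z = true ->
    f w < 0 -> 0 <= f z ->
    ~ connected n (remove_edge adj w z).
Proof.
  exists 10%nat. intros n Hn adj Sg Cg Hl f [Hnz [Hor Hray]] w z Hw Hz Hwz Hfw Hfz Cr.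
  assert (Hzw : adj z w = true) by (destruct Sg as [Sy _]; rewrite Sy; auto).
  assert (Hne : w <> z) by (intros ->; destruct Sg as [_ Ir]; rewrite Ir in Hwz; auto; discriminate).
  destruct (alpha_spec n (ex_intro _ padj (conj (path_simple n) (path_connected n)))) as [_ AS].
  assert (Hal : alpha n < 1/2) by (pose proof (AS padj (path_simple n) (path_connected n)); pose proof (path_lambda n Hn); lra).
  set (r := remove_edge adj w z) in *.
  assert (Sr : simple_graph n r) by (apply r_simple; auto).
  assert (Dg : forall u, (u < n)%nat -> 1 <= deg n adj u) by (intros; apply deg_ge1; auto; lia).
  assert (Dr : forall u, (u < n)%nat -> 1 <= deg n r u) by (intros; apply deg_ge1; auto; lia).
  assert (HD := norm_pos n adj f Dg Hnz).
  set (D := weighted_norm n adj f) in *. set (E := edge_energy n adj f) in *.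
  set (lam := alpha n) in *.
  assert (HE : E = lam * D).
  { unfold rayleigh in Hray. fold E D in Hray. rewrite Hl in Hray. rewrite <- Hray. field. lra. }
  assert (Hlam0 : 0 <= lam) by (rewrite <- Hl, <- Hray; apply rayleigh_nonneg).
  assert (HS : gdsum n adj f = 0) by (exact Hor).
  assert (HV : 2 <= gvol n r).
  { assert (INR n <= gvol n r) by (rewrite <- rsum_const1; unfold gvol; apply rsum_le; auto).
    assert (2 <= INR n) by (replace 2 with (INR 2) by (simpl; lra); apply le_INR; lia). lra. }
  pose proof (shift_bound n r f w z ltac:(lra) Hw Hz ltac:(lra)) as B.
  unfold r in B. rewrite (energy_r n adj w z Hwz Hzw Hne Hw Hz), (norm_r n adj w z Hwz Hzw Hne Hw Hz),
    (dsum_r n adj w z Hwz Hzw Hne Hw Hz), HS in B. fold r in B. fold D E in B.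
  set (V := gvol n r) in *.
  set (s := 0 - f w - f z) in *.
  set (Q := D - f w ^ 2 - f z ^ 2 - s ^ 2 / V) in *.
  assert (HQ : 0 < Q).
  { set (c := s / V).
    assert (EQ : weighted_norm n r (fun u => f u - c) = Q).
    { rewrite norm_shift. unfold r. rewrite (norm_r n adj w z Hwz Hzw Hne Hw Hz), (dsum_r n adj w z Hwz Hzw Hne Hw Hz), HS.
      fold r V D. unfold Q, c, s. field. lra. }
    rewrite <- EQ. apply norm_pos; auto.
    destruct (Req_dec (f w) c). - exists z. split; auto. lra. - exists w. split; auto. lra. }
  set (q := s ^ 2 / V) in *.
  assert (Hq : q * V = s ^ 2) by (unfold q; field; lra).
  assert (Hq0 : 0 <= q) by (unfold q; apply Rdiv_nonneg_any; [apply pow2_ge_0|lra]).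
  assert (Hs2 : s ^ 2 <= 2 * (f w ^ 2 + f z ^ 2)) by (unfold s; nra).
  assert (Hqb : q <= f w ^ 2 + f z ^ 2) by nra.
  assert (Hb : 0 < f w ^ 2 + f z ^ 2) by nra.
  assert (Hlt : E - (f w - f z) ^ 2 < lam * Q).
  { unfold Q. fold q. rewrite HE.
    assert (lam * (f w ^ 2 + f z ^ 2 + q) < (f w - f z) ^ 2) by nra. nra. }
  assert (X : (E - (f w - f z) ^ 2) / Q < lam).
  { apply Rmult_lt_reg_r with Q; auto. unfold Rdiv. rewrite Rmult_assoc, Rinv_l by lra. lra. }
  pose proof (AS r Sr Cr). lra.
Qed.
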